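(* Let $M$ be a finite rectangular monoid, $k$ a field which is a splitting field for the maximal subgroups of $M$, $X\in\Lambda(M)$, and $A$ a $k[G_X\times G_X^{op}]$-module regarded as an $M$-bimodule via $m\cdot a\cdot m'=\rho_X(m)a\rho_X(m')$. Then $H^1(M,A)\cong H^1(G_X,A)\oplus\mathrm{Hom}_{k[G_X\times G_X^{op}]}(V_{X,X},A)$. In particular, if the characteristic of $k$ does not divide $|G_X|$, then $H^1(M,A)\cong\mathrm{Hom}_{k[G_X\times G_X^{op}]}(V_{X,X},A)$.
   Context: $E(M)$ idempotents, $m^\omega$ idempotent power. $M$ rectangular: each $\{f\in E(M):MfM=MeM\}$ closed under multiplication. $\Lambda(M)$: ideals $MeM$, $e\in E(M)$; $\sigma(m)=Mm^\omega M$; $\sigma(m)\ge X$ means $X\subseteq\sigma(m)$; $\nabla X=\{m:X\not\subseteq MmM\}$. Fixed $e_X$ with $Me_XM=X$, $G_X$ the group of units of $e_XMe_X$, $\rho_X(m)=e_Xme_X$ if $\sigma(m)\ge X$ and $0$ otherwise. $I_X=e_XMe_X\setminus G_X$; $\sim$ is the least equivalence relation on $I_X$ such that $e_Xmne_X\sim e_Xme_Xne_X$ for all $m,n\in M$ with $\sigma(mn)\not\ge X$, and $z\sim z'$ for all $z,z'\in(\nabla X)(\nabla X)\cap I_X$. $V_{X,X}=kI_X/W_X$ where $W_X$ is spanned by $(\nabla X)(\nabla X)\cap I_X$ and all differences $m-n$ with $m\sim n$; it is a $G_X\times G_X^{op}$-module via left and right multiplication. $H^1(M,A)$ (resp. $H^1(G_X,A)$):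 derivations $d$ with $d(mn)=md(n)+d(m)n$ modulo inner derivations $m\mapsto ma-am$. *)

(* Defs.v *)
From HB Require Import structures.
From mathcomp Require Import all_boot all_order all_algebra.
From Stdlib Require Import Relations.
Set Implicit Arguments. Unset Strict Implicit. Unset Printing Implicit Defensive.
Import GRing.Theory.

#[short(type="finMonoidType")]
HB.structure Definition FinMonoid := {M of Monoid M & Finite M}.

Local Open Scope group_scope.

Section MonoidNotions.
Variable M : finMonoidType.
Implicit Types (m e f x y : M) (X : {set M}).

Definition idem e : bool := e * e == e.
Definition ideal m : {set M} := [set x * m * y | x : M, y : M].
Definition omega m : M := m ^+ (#|M|`!).
Definition sigma m : {set M} := ideal (omega m).
Definition rectangular : Prop :=
  forall e, idem e -> forall f g, idem f -> idem g ->
    ideal f = ideal e -> ideal g = ideal e -> idem (f * g) /\ ideal (f * g) = ideal e.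
Definition inLambda X : Prop := exists e, idem e /\ X = ideal e.
Definition nabla X : {set M} := [set m | ~~ (X \subset ideal m)].
Definition nabla2 X : {set M} := [set a * b | a in nabla X, b in nabla X].
Definition corner e : {set M} := [set e * m * e | m : M].
Definition units e : {set M} :=
  [set u in corner e | [exists v in corner e, (u * v == e) && (v * u == e)]].
Definition Iset e : {set M} := corner e :\: units e.

Definition sim_gen X e (a b : M) : Prop :=
  a \in Iset e /\ b \in Iset e /\
  ((exists m n, ~~ (X \subset sigma (m * n)) /\ a = e * (m * n) * e /\ b = e * m * e * n * e)
   \/ (a \in nabla2 X /\ b \in nabla2 X)).
(** ~ : least equivalence relation generated (restricted to I_X, where all
    generators live) *)
Definition sim X e : relation M := clos_refl_sym_trans M (sim_gen X e).
End MonoidNotions.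

Local Open Scope ring_scope.

Section Cohomology.
Variables (M : finMonoidType) (k : fieldType) (A : lmodType k).
Variables (X : {set M}) (eX : M) (L R : M -> A -> A).
Local Notation G := (units eX).
Local Notation I := (Iset eX).

(** A is a k[G x G^op]-module: L = left action, R = right action of G *)
Definition GGop_module : Prop :=
  (forall g, g \in G -> forall c a b, L g (c *: a + b) = c *: L g a + L g b) /\
  (forall g, g \in G -> forall c a b, R g (c *: a + b) = c *: R g a + R g b) /\
  (forall a, L eX a = a) /\ (forall a, R eX a = a) /\
  (forall g h, g \in G -> h \in G -> forall a, L (g * h)%g a = L g (L h a)) /\
  (forall g h, g \in G -> h \in G -> forall a, R (g * h)%g a = R h (R g a)) /\
  (forall g h, g \in G -> h \in G -> forall a, L g (R h a) = R h (L g a)).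

Definition lact (m : M) (a : A) : A :=
  if X \subset sigma m then L (eX * m * eX)%g a else 0.
Definition ract (a : A) (m : M) : A :=
  if X \subset sigma m then R (eX * m * eX)%g a else 0.

Definition DerM (d : M -> A) : Prop :=
  forall m n, d (m * n)%g = lact m (d n) + ract (d m) n.
Definition InnM (d : M -> A) : Prop :=
  exists a, forall m, d m = lact m a - ract a m.
(** derivations / inner derivations of G_X (functions supported on G_X) *)
Definition DerG (d : M -> A) : Prop :=
  (forall x, x \notin G -> d x = 0) /\
  (forall g h, g \in G -> h \in G -> d (g * h)%g = L g (d h) + R h (d g)).
Definition InnG (d : M -> A) : Prop :=
  exists a, forall g, d g = if g \in G then L g a - R g a else 0.

(** Hom_{k[G x G^op]}(V_{X,X}, A), V_{X,X} = k I_X / W_X: a k-linear map out of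
    k I_X / W_X is a function on the basis I_X (here: supported on I_X) killing
    the generators of W_X; equivariance for left/right multiplication. *)
Definition HomV (f : M -> A) : Prop :=
  (forall x, x \notin I -> f x = 0) /\
  (forall z, z \in I -> z \in nabla2 X -> f z = 0) /\
  (forall a b, sim X eX a b -> a \in I -> b \in I -> f a = f b) /\
  (forall g z, g \in G -> z \in I ->
      f (g * z)%g = L g (f z) /\ f (z * g)%g = R g (f z)).

(** H^1(M,A) ≅ H^1(G_X,A) ⊕ Hom(V,A), as k-vector spaces: a k-linear map
    Der(M,A) -> Der(G_X,A) x Hom(V,A) inducing a bijection
    Der(M,A)/Inn(M,A) -> Der(G_X,A)/Inn(G_X,A) x Hom(V,A). *)
Definition H1_iso_sum : Prop :=
  exists Phi : (M -> A) -> (M -> A) * (M -> A),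
    (forall c d1 d2, DerM d1 -> DerM d2 -> forall x,
        (Phi (fun m => c *: d1 m + d2 m)).1 x = c *: (Phi d1).1 x + (Phi d2).1 x /\
        (Phi (fun m => c *: d1 m + d2 m)).2 x = c *: (Phi d1).2 x + (Phi d2).2 x) /\
    (forall d, DerM d -> DerG (Phi d).1 /\ HomV (Phi d).2) /\
    (forall d, DerM d -> ((InnG (Phi d).1 /\ forall x, (Phi d).2 x = 0) <-> InnM d)) /\
    (forall d' h, DerG d' -> HomV h ->
       exists d, DerM d /\ InnG (fun x => (Phi d).1 x - d' x) /\
                 forall x, (Phi d).2 x = h x).

Definition H1_iso_Hom : Prop :=
  exists Psi : (M -> A) -> (M -> A),
    (forall c d1 d2, DerM d1 -> DerM d2 -> forall x,
        Psi (fun m => c *: d1 m + d2 m) x = c *: Psi d1 x + Psi d2 x) /\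
    (forall d, DerM d -> HomV (Psi d)) /\
    (forall d, DerM d -> ((forall x, Psi d x = 0) <-> InnM d)) /\
    (forall h, HomV h -> exists d, DerM d /\ forall x, Psi d x = h x).
End Cohomology.

Section Splitting.
Variables (M : finMonoidType) (k : fieldType).

Definition is_rep (e : M) n (rG : M -> 'M[k]_n) : Prop :=
  rG e = 1%:M /\
  forall x y, x \in units e -> y \in units e -> rG (x * y)%g = rG x *m rG y.
Definition rep_irreducible (e : M) n (rG : M -> 'M[k]_n) : Prop :=
  (0 < n)%N /\
  forall m (U : 'M[k]_(m, n)),
    (forall x, x \in units e -> (U *m rG x <= U)%MS) -> U != 0 -> row_full U.
(** enveloping algebra (as in mxrepresentation.v) and absolute irreducibility *)
Definition envelop (e : M) n (rG : M -> 'M[k]_n) : 'M[k]_(#|units e|, n * n) :=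
  \matrix_(i < #|units e|) mxvec (rG (enum_val i)).
Definition rep_abs_irreducible (e : M) n (rG : M -> 'M[k]_n) : Prop :=
  (0 < n)%N /\ row_full (envelop e rG).
Definition splitting_field_maxsubgroups : Prop :=
  forall e : M, idem e -> forall n (rG : M -> 'M[k]_n),
    is_rep e rG -> rep_irreducible e rG -> rep_abs_irreducible e rG.
End Splitting.

(* Main.v *)
Require Import Defs.
From mathcomp Require Import all_boot all_order all_algebra.
From Stdlib Require Import Relations.
Set Implicit Arguments. Unset Strict Implicit. Unset Printing Implicit Defensive.
Import GRing.Theory.

Section Semi.
Local Open Scope group_scope.
Variable M : finMonoidType.
Implicit Types (m n e f x y z a b c t u v : M).

Lemma idemE e : idem e -> e * e = e.
Proof. by move/eqP. Qed.

Lemma mem_idealP a b : reflect (exists x y, a = x * b * y) (a \in ideal b).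
Proof.
apply: (iffP imset2P) => [[x y _ _ ->]|[x [y ->]]]; first by exists x, y.
by exists x y.
Qed.

Lemma idealI x b y : x * b * y \in ideal b.
Proof. by apply/mem_idealP; exists x, y. Qed.

Lemma ideal_self m : m \in @ideal M m.
Proof. by apply/mem_idealP; exists 1, 1; rewrite mul1g mulg1. Qed.

Lemma ideal_sub a b : a \in ideal b -> ideal a \subset ideal b.
Proof.
case/mem_idealP=> x [y ->]; apply/subsetP=> z /mem_idealP [u [v ->]].
by rewrite !mulgA -(mulgA _ y v) idealI.
Qed.

Lemma ideal_trans a b c : a \in ideal b -> b \in ideal c -> a \in ideal c.
Proof. by move=> ab /ideal_sub/subsetP; apply. Qed.

Lemma ideal_eq a b : a \in ideal b -> b \in ideal a -> ideal a = ideal b.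
Proof. by move=> ab ba; apply/eqP; rewrite eqEsubset !ideal_sub. Qed.

Lemma ideal_mulr m n : m * n \in ideal m.
Proof. by apply/mem_idealP; exists 1, n; rewrite mul1g. Qed.
Lemma ideal_mull m n : m * n \in ideal n.
Proof. by apply/mem_idealP; exists m, 1; rewrite mulg1. Qed.

Lemma ideal_exp e m k : (0 < k)%N -> e \in ideal (m ^+ k) -> e \in ideal m.
Proof. by case: k => // k _; rewrite expgS => /ideal_trans; apply; apply: ideal_mulr. Qed.

Lemma cornerP e t : idem e -> reflect (e * t * e = t) (t \in corner e).
Proof.
move=> /idemE ee; apply: (iffP imsetP) => [[m _ ->]|<-]; last by exists t.
by rewrite -!mulgA ee !mulgA ee.
Qed.

Lemma cornerI e m : e * m * e \in corner e.
Proof. by apply/imsetP; exists m. Qed.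

Lemma corner_l e t : idem e -> t \in corner e -> e * t = t.
Proof. by move=> ee /(cornerP _ ee) <-; rewrite !mulgA (idemE ee). Qed.
Lemma corner_r e t : idem e -> t \in corner e -> t * e = t.
Proof. by move=> ee /(cornerP _ ee) <-; rewrite -!mulgA (idemE ee). Qed.

Lemma corner_mul e a b : idem e -> a \in corner e -> b \in corner e -> a * b \in corner e.
Proof.
move=> ee ca cb; apply/(cornerP _ ee).
by rewrite mulgA (corner_l ee ca) -mulgA (corner_r ee cb).
Qed.

Lemma corner_e e : idem e -> e \in corner e.
Proof. by move=> ee; apply/(cornerP _ ee); rewrite !(idemE ee). Qed.

Lemma fin_inv e a b : idem e -> a \in corner e -> b \in corner e -> a * b = e -> b * a = e.
Proof.
move=> ee ca cb ab.
have inj : {in corner e &, injective (fun t => b * t)}.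
  move=> t1 t2 c1 c2 /(congr1 (fun t => a * t)); rewrite !mulgA ab.
  by rewrite (corner_l ee c1) (corner_l ee c2).
have sub : [set b * t | t in corner e] \subset corner e.
  by apply/subsetP=> _ /imsetP [t ct ->]; exact: corner_mul.
have : e \in [set b * t | t in corner e].
  have -> : [set b * t | t in corner e] = corner e.
    by apply/eqP; rewrite eqEcard sub (card_in_imset inj) leqnn.
  exact: corner_e.
case/imsetP=> c cc bc.
have ac : a = c by rewrite -(corner_r ee ca) bc mulgA ab (corner_l ee cc).
by rewrite ac.
Qed.

Lemma unitsP e u : reflect (u \in corner e /\ exists2 v, v \in corner e & u * v = e /\ v * u = e)
  (u \in units e).
Proof.
rewrite inE; apply: (iffP andP) => [[cu /existsP [v /andP [cv /andP [/eqP h1 /eqP h2]]]]|[cu [v cv [h1 h2]]]].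
  by split=> //; exists v.
by split=> //; apply/existsP; exists v; rewrite cv h1 h2 !eqxx.
Qed.

Lemma units_corner e u : u \in units e -> u \in corner e.
Proof. by case/unitsP. Qed.

Lemma stab e z : idem e -> z \in corner e -> e \in ideal z -> z \in units e.
Proof.
move=> ee cz /mem_idealP [x [y exy]].
set x' := e * x * e; set y' := e * y * e.
have cx : x' \in corner e by exact: cornerI.
have cy : y' \in corner e by exact: cornerI.
have h : x' * z * y' = e.
  have -> : x' * z * y' = e * (x * (e * z * e) * y) * e by rewrite /x' /y' !mulgA.
  by move/(cornerP _ ee): cz => ->; rewrite -exy !(idemE ee).
have czy : z * y' \in corner e by exact: corner_mul.
have cxz : x' * z \in corner e by exact: corner_mul.
have h1 : z * y' * x' = e by apply: (fin_inv ee cx czy); rewrite mulgA.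
have h2 : y' * (x' * z) = e by apply: (fin_inv ee cxz cy).
apply/unitsP; split=> //; exists (y' * x'); first exact: corner_mul.
by split; [rewrite mulgA h1 | rewrite -mulgA h2].
Qed.

Lemma units_ideal e u : u \in units e -> e \in ideal u.
Proof. by case/unitsP=> _ [v _ [<- _]]; apply: ideal_mulr. Qed.

Lemma units_idem e u : idem e -> idem u -> u \in units e -> u = e.
Proof.
move=> ee /idemE uu /unitsP [cu [v cv [h1 _]]].
by rewrite -(corner_r ee cu) -h1 mulgA uu.
Qed.

Lemma units_mul e a b : idem e -> a \in units e -> b \in units e -> a * b \in units e.
Proof.
move=> ee ua ub; apply: stab => //; first by apply: corner_mul => //; apply: units_corner; [exact: ua | exact: ub].
case/unitsP: ua => ca [a' ca' [aa' _]]; case/unitsP: ub => cb [b' cb' [bb' _]].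
apply/mem_idealP; exists 1, (b' * a'); rewrite mul1g.
by rewrite -mulgA (mulgA b) bb' (corner_l ee ca') aa'.
Qed.

Lemma units_e e : idem e -> e \in units e.
Proof. by move=> ee; apply/unitsP; split; [exact: corner_e | exists e; rewrite ?corner_e ?(idemE ee)]. Qed.

End Semi.

Section Rect.
Local Open Scope group_scope.
Variable M : finMonoidType.
Hypothesis hrect : rectangular M.
Implicit Types (m n e f x y z a b c t u v : M).

Lemma corner_lx e t : idem e -> t \in corner e -> forall x, e * (t * x) = t * x.
Proof. by move=> ee ct x; rewrite mulgA (corner_l ee ct). Qed.
Lemma corner_rx e t : idem e -> t \in corner e -> forall x, t * (e * x) = t * x.
Proof. by move=> ee ct x; rewrite mulgA (corner_r ee ct). Qed.

Lemma ds e s t : idem e -> e \in ideal s -> e \in ideal t -> e \in ideal (s * t).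
Proof.
move=> ee /mem_idealP [x [y exy]] /mem_idealP [u [v euv]].
have E := idemE ee.
set f1 := y * e * x * s; set f2 := t * v * e * u.
have i1 : idem f1.
  apply/eqP; rewrite /f1.
  have -> : y * e * x * s * (y * e * x * s) = y * (e * (x * s * y) * e) * x * s by rewrite !mulgA.
  by rewrite -exy E E.
have i2 : idem f2.
  apply/eqP; rewrite /f2.
  have -> : t * v * e * u * (t * v * e * u) = t * v * (e * (u * t * v) * e) * u by rewrite !mulgA.
  by rewrite -euv E E.
have j1 : ideal f1 = ideal e.
  apply: ideal_eq.
    by apply/mem_idealP; exists y, (x * s); rewrite /f1 ?mulgA.
  apply/mem_idealP; exists (x * s), y.
  have -> : x * s * f1 * y = (x * s * y) * e * (x * s * y) by rewrite /f1 ?mulgA.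
  by rewrite -exy !E.
have j2 : ideal f2 = ideal e.
  apply: ideal_eq.
    by apply/mem_idealP; exists (t * v), u; rewrite /f2 ?mulgA.
  apply/mem_idealP; exists u, (t * v).
  have -> : u * f2 * (t * v) = (u * t * v) * e * (u * t * v) by rewrite /f2 ?mulgA.
  by rewrite -euv !E.
have [_ j12] := hrect ee i1 i2 j1 j2.
have : e \in ideal (f1 * f2) by rewrite j12; apply: ideal_self.
move/ideal_trans; apply; apply/mem_idealP; exists (y * e * x), (v * e * u).
by rewrite /f1 /f2 !mulgA.
Qed.

Lemma band1 e x y : idem e -> idem x -> idem y -> ideal x = ideal e -> ideal y = ideal e ->
  x * y * x = x.
Proof.
move=> ee ix iy jx jy.
have [ixy jxy] := hrect ee ix iy jx jy.
have [iw jw] := hrect ee ixy ix jxy jx.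
have cw : x * y * x \in corner x.
  by apply/(cornerP _ ix); rewrite !mulgA (idemE ix) -(mulgA _ x x) (idemE ix).
have : x * y * x \in units x by apply: stab => //; rewrite jw -jx ideal_self.
by move/(units_idem ix iw).
Qed.

Lemma band2 e x y z : idem e -> idem x -> idem y -> idem z -> ideal x = ideal e ->
  ideal y = ideal e -> ideal z = ideal e -> x * y * z = x * z.
Proof.
move=> ee ix iy iz jx jy jz.
have [ixy jxy] := hrect ee ix iy jx jy.
have [iw jw] := hrect ee ixy iz jxy jz.
have [ixz jxz] := hrect ee ix iz jx jz.
have -> : x * y * z = (x * z * x) * y * (z * x * z) by rewrite (band1 ee ix iz) // (band1 ee iz ix).
have -> : x * z * x * y * (z * x * z) = (x * z) * (x * y * z) * (x * z) by rewrite !mulgA.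
exact: (band1 ee ixz iw).
Qed.

Variable e : M.
Hypothesis ee : idem e.

Lemma ideal_expP m k : e \in ideal m -> e \in ideal (m ^+ k).
Proof.
move=> em; elim: k => [|k IH]; first by rewrite expg0; apply/mem_idealP; exists e, 1; rewrite !mulg1.
by rewrite expgS; apply: ds.
Qed.

Lemma sigmaE (X : {set M}) m : X = ideal e -> (X \subset sigma m) = (e \in ideal m).
Proof.
move=> ->; apply/idP/idP => [/subsetP h|em].
  have := h e (ideal_self e); rewrite /sigma /omega; apply: ideal_exp; exact: fact_gt0.
by apply: ideal_sub; rewrite /sigma /omega; apply: ideal_expP.
Qed.

Lemma P_mul m n : (e \in ideal (m * n)) = (e \in ideal m) && (e \in ideal n).
Proof.
apply/idP/andP => [h|[]]; last exact: ds.
by split; apply: ideal_trans h _; [apply: ideal_mulr | apply: ideal_mull].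
Qed.

Lemma unitsE m : (e * m * e \in units e) = (e \in ideal m).
Proof.
apply/idP/idP => [/units_ideal h|h].
  apply: ideal_trans h _; apply/mem_idealP; exists e, e; by [].
apply: stab => //; first exact: cornerI.
by rewrite !P_mul h ideal_self.
Qed.

Lemma units_inv g : g \in units e -> exists2 g', g' \in corner e & g * g' = e /\ g' * g = e.
Proof. by case/unitsP. Qed.

Lemma rho_mul m n : e \in ideal m -> e \in ideal n -> e * (m * n) * e = (e * m * e) * (e * n * e).
Proof.
move=> hm hn.
have ug : e * m * e \in units e by rewrite unitsE.
have uh : e * n * e \in units e by rewrite unitsE.
have cg := units_corner ug; have ch := units_corner uh.
have [g' cg' [gg' g'g]] := units_inv ug.
have [h' ch' [hh' h'h]] := units_inv uh.
set g := e * m * e in ug cg gg' g'g *; set h := e * n * e in uh ch hh' h'h *.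
set f1 := g' * m; set f2 := n * h'.
have i1 : idem f1.
  apply/eqP; rewrite /f1.
  have -> : g' * m * (g' * m) = (g' * g) * (g' * m).
    by rewrite /g -!mulgA !(corner_rx ee cg') (corner_lx ee cg').
  by rewrite g'g (corner_lx ee cg').
have i2 : idem f2.
  apply/eqP; rewrite /f2.
  have -> : n * h' * (n * h') = n * (h' * h * h').
    by rewrite /h -!mulgA !(corner_rx ee ch') (corner_l ee ch').
  by rewrite h'h (corner_l ee ch').
have j1 : ideal f1 = ideal e.
  apply: ideal_eq.
    by apply/mem_idealP; exists g', m; rewrite /f1 (corner_r ee cg').
  apply/mem_idealP; exists 1, e; rewrite mul1g /f1.
  have -> : g' * m * e = g' * g by rewrite /g -!mulgA (corner_rx ee cg').
  by rewrite g'g.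
have j2 : ideal f2 = ideal e.
  apply: ideal_eq.
    by apply/mem_idealP; exists n, h'; rewrite /f2 -mulgA (corner_l ee ch').
  apply/mem_idealP; exists e, 1; rewrite mulg1 /f2.
  have -> : e * (n * h') = h * h' by rewrite /h -!mulgA (corner_l ee ch').
  by rewrite hh'.
have b := band2 ee i1 ee i2 j1 (erefl _) j2.
have : g * (f1 * e * f2) * h = g * (f1 * f2) * h by rewrite b.
rewrite /f1 /f2.
have -> : g * (g' * m * e * (n * h')) * h = (g * g') * m * e * n * (h' * h) by rewrite !mulgA.
have -> : g * (g' * m * (n * h')) * h = (g * g') * m * n * (h' * h) by rewrite !mulgA.
rewrite gg' h'h => E.
rewrite /g /h. have -> : e * m * e * (e * n * e) = e * m * (e * e) * n * e by rewrite !mulgA.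
by rewrite (idemE ee) E !mulgA.
Qed.

End Rect.

Section Coh.
Variables (M : finMonoidType) (k : fieldType) (A : lmodType k).
Variables (X : {set M}) (e : M) (L R : M -> A -> A).
Hypothesis hrect : rectangular M.
Hypothesis ee : idem e.
Hypothesis hX : X = ideal e.
Hypothesis hA : GGop_module e L R.

Local Notation G := (units e).
Local Notation I := (Iset e).
Local Open Scope ring_scope.
Local Open Scope group_scope.

Definition Q (m : M) : bool := (e * m * e \in G).

Lemma sigQ m : (X \subset sigma m) = Q m.
Proof. by rewrite (sigmaE hrect ee m hX) /Q unitsE. Qed.

Lemma Q_mul m n : Q (m * n) = Q m && Q n.
Proof. by rewrite /Q !(unitsE hrect ee) P_mul. Qed.

Lemma Q_units g : g \in G -> Q g.
Proof.
by move=> hg; rewrite /Q (cornerP _ ee (units_corner hg)).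
Qed.

Lemma units_ege g : g \in G -> e * g * e = g.
Proof. by move=> hg; apply/(cornerP _ ee); exact: units_corner. Qed.

Lemma Q_rho m n : Q m -> Q n -> e * (m * n) * e = (e * m * e) * (e * n * e).
Proof. by rewrite /Q !(unitsE hrect ee) => hm hn; apply: rho_mul. Qed.

Lemma inI z : (z \in I) = (z \in corner e) && (z \notin G).
Proof. by rewrite inE andbC. Qed.

Lemma I_notQ z : z \in I -> ~~ Q z.
Proof. by rewrite inI /Q => /andP [cz]; rewrite (cornerP _ ee cz). Qed.

Lemma notQ_I m : ~~ Q m -> e * m * e \in I.
Proof. by rewrite inI cornerI. Qed.

Lemma I_nabla z : z \in I -> z \in nabla X.
Proof.
rewrite inI => /andP [cz nz]; rewrite /nabla inE; apply/negP => /subsetP h.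
have : e \in ideal z by apply: h; rewrite hX ideal_self.
by move/(stab ee cz); rewrite (negbTE nz).
Qed.

Lemma nabla_notQ a : a \in nabla X -> ~~ Q a.
Proof.
rewrite inE /Q (unitsE hrect ee); apply: contra => h.
by rewrite hX; apply: ideal_sub.
Qed.

Lemma GI_mul g z : g \in G -> z \in I -> g * z \in I.
Proof.
move=> hg; rewrite !inI => /andP [cz nz].
rewrite (corner_mul ee (units_corner hg) cz) /=; apply: contra nz => h.
apply: stab => //; apply: ideal_trans (units_ideal h) _; exact: ideal_mull.
Qed.

Lemma IG_mul g z : g \in G -> z \in I -> z * g \in I.
Proof.
move=> hg; rewrite !inI => /andP [cz nz].
rewrite (corner_mul ee cz (units_corner hg)) /=; apply: contra nz => h.
apply: stab => //; apply: ideal_trans (units_ideal h) _; exact: ideal_mulr.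
Qed.

Lemma LD g : g \in G -> forall a b, L g (a + b) = L g a + L g b.
Proof. by move=> hg a b; move: hA; rewrite /GGop_module => -[hL _]; rewrite -[a]scale1r (hL g hg) !scale1r. Qed.
Lemma RD g : g \in G -> forall a b, R g (a + b) = R g a + R g b.
Proof. by move=> hg a b; move: hA; rewrite /GGop_module => -[_ [hR _]]; rewrite -[a]scale1r (hR g hg) !scale1r. Qed.
Lemma L0 g : g \in G -> L g 0 = 0.
Proof.
move=> hg; have := LD hg 0 0; rewrite addr0 => /(congr1 (fun t => t - L g 0)).
by rewrite subrr addrK.
Qed.
Lemma R0 g : g \in G -> R g 0 = 0.
Proof.
move=> hg; have := RD hg 0 0; rewrite addr0 => /(congr1 (fun t => t - R g 0)).
by rewrite subrr addrK.
Qed.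
Lemma LZ g : g \in G -> forall c a, L g (c *: a) = c *: L g a.
Proof.
move=> hg c a; move: hA; rewrite /GGop_module => -[hL _]; have := hL g hg c a 0.
by rewrite !addr0 (L0 hg) addr0.
Qed.
Lemma RZ g : g \in G -> forall c a, R g (c *: a) = c *: R g a.
Proof.
move=> hg c a; move: hA; rewrite /GGop_module => -[_ [hR _]]; have := hR g hg c a 0.
by rewrite !addr0 (R0 hg) addr0.
Qed.
Lemma LB g : g \in G -> forall a b, L g (a - b) = L g a - L g b.
Proof. by move=> hg a b; rewrite LD // -scaleN1r LZ // scaleN1r. Qed.
Lemma RB g : g \in G -> forall a b, R g (a - b) = R g a - R g b.
Proof. by move=> hg a b; rewrite RD // -scaleN1r RZ // scaleN1r. Qed.
Lemma Le a : L e a = a. Proof. by move: hA; rewrite /GGop_module => -[_ [_ [h _]]]; apply: h. Qed.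
Lemma Re a : R e a = a. Proof. by move: hA; rewrite /GGop_module => -[_ [_ [_ [h _]]]]; apply: h. Qed.

Lemma lactE m a : lact X e L m a = if Q m then L (e * m * e) a else 0.
Proof. by rewrite /lact sigQ. Qed.
Lemma ractE m a : ract X e R a m = if Q m then R (e * m * e) a else 0.
Proof. by rewrite /ract sigQ. Qed.

Lemma lact0 m : lact X e L m 0 = 0.
Proof. by rewrite lactE; case: ifP => // /L0. Qed.
Lemma ract0 m : ract X e R 0 m = 0.
Proof. by rewrite ractE; case: ifP => // /R0. Qed.
Lemma lactG g a : g \in G -> lact X e L g a = L g a.
Proof. by move=> hg; rewrite lactE Q_units // units_ege. Qed.
Lemma ractG g a : g \in G -> ract X e R a g = R g a.
Proof. by move=> hg; rewrite ractE Q_units // units_ege. Qed.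
Lemma lactN m a : ~~ Q m -> lact X e L m a = 0.
Proof. by rewrite lactE => /negbTE ->. Qed.
Lemma ractN m a : ~~ Q m -> ract X e R a m = 0.
Proof. by rewrite ractE => /negbTE ->. Qed.

Lemma eG : e \in G. Proof. exact: units_e. Qed.

Section Der.
Variable d : M -> A.
Hypothesis hd : DerM X e L R d.

Lemma d_e : d e = 0.
Proof.
have := hd e e; rewrite (idemE ee) lactG ?ractG ?eG // Le Re.
move/(congr1 (fun t => t - d e)); rewrite subrr addrK => ->; done.
Qed.

Lemma d_em m : d (e * m) = d m.
Proof. by rewrite hd d_e ract0 lactG ?eG // Le addr0. Qed.
Lemma d_me m : d (m * e) = d m.
Proof. by rewrite hd d_e lact0 ractG ?eG // Re add0r. Qed.
Lemma d_eme m : d (e * m * e) = d m.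
Proof. by rewrite d_me d_em. Qed.

Lemma d_nabla2 z : z \in nabla2 X -> d z = 0.
Proof.
case/imset2P=> a b ha hb ->.
by rewrite hd lactN ?ractN ?nabla_notQ // addr0.
Qed.

Lemma d_sim a b : sim X e a b -> d a = d b.
Proof.
elim=> {a b} [a b [_ [_ [[m [n [hmn [-> ->]]]]|[ha hb]]]]|a|a b _ ->|a b c _ -> _ ->] //.
  rewrite d_eme.
  have -> : e * m * e * n * e = e * (m * (e * n)) * e by rewrite !mulgA.
  rewrite d_eme (hd m (e * n)) d_em (hd m n).
  by rewrite (ractE (e * n)) (ractE n) Q_mul (Q_units eG) /= !mulgA (idemE ee).
by rewrite !d_nabla2.
Qed.
End Der.


Definition Phi1 (d : M -> A) x := if x \in G then d x else 0.
Definition Phi2 (d : M -> A) x := if x \in I then d x else 0.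

Lemma I_corner z : z \in I -> z \in corner e.
Proof. by rewrite inI => /andP []. Qed.

Lemma phi_der d : DerM X e L R d -> DerG e L R (Phi1 d) /\ HomV X e L R (Phi2 d).
Proof.
move=> hd; split.
  split; first by move=> x /negbTE hx; rewrite /Phi1 hx.
  move=> g h hg hh; rewrite /Phi1 hg hh (units_mul ee hg hh) hd lactG // ractG //.
split; first by move=> x /negbTE hx; rewrite /Phi2 hx.
split; first by move=> z hz hn; rewrite /Phi2 hz (d_nabla2 hd).
split; first by move=> a b hs ha hb; rewrite /Phi2 ha hb (d_sim hd hs).
move=> g z hg hz; rewrite /Phi2 (GI_mul hg hz) (IG_mul hg hz) hz.
rewrite !hd (lactG _ hg) (ractG _ hg) (ractN _ (I_notQ hz)) (lactN _ (I_notQ hz)).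
by rewrite addr0 add0r.
Qed.

Lemma phi_ker d : DerM X e L R d ->
  ((InnG e L R (Phi1 d) /\ forall x, Phi2 d x = 0) <-> InnM X e L R d).
Proof.
move=> hd; split.
  case=> [[a ha] h2]; exists a => m; rewrite -(d_eme hd) lactE ractE.
  case Qm: (Q m).
    by have := ha (e * m * e); rewrite /Phi1 -/(Q m) Qm.
  have hI := notQ_I (negbT Qm).
  by have := h2 (e * m * e); rewrite /Phi2 hI => ->; rewrite subrr.
case=> a ha; split.
  exists a => g; rewrite /Phi1; case: ifP => hg //.
  by rewrite ha lactG // ractG.
move=> x; rewrite /Phi2; case: ifP => hx //.
by rewrite ha lactN ?ractN ?I_notQ // subrr.
Qed.

Lemma sim_rho m n : ~~ Q (m * n) -> sim X e (e * (m * n) * e) (e * m * e * (e * n * e)).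
Proof.
move=> hmn.
have -> : e * m * e * (e * n * e) = e * m * e * n * e.
  by rewrite !mulgA -(mulgA _ e e) (idemE ee).
apply: rst_step; split; first exact: notQ_I.
split.
  have -> : e * m * e * n * e = e * (m * e * n) * e by rewrite !mulgA.
  by apply: notQ_I; rewrite !Q_mul (Q_units eG) andbT -Q_mul.
by left; exists m, n; rewrite sigQ.
Qed.

Lemma rhoI m n : ~~ Q (m * n) -> e * m * e * (e * n * e) \in I.
Proof.
move=> hmn.
have -> : e * m * e * (e * n * e) = e * (m * e * n) * e by rewrite !mulgA -(mulgA _ e e) (idemE ee).
by apply: notQ_I; rewrite !Q_mul (Q_units eG) andbT -Q_mul.
Qed.

Lemma phi_surj d' h : DerG e L R d' -> HomV X e L R h ->
  exists d, DerM X e L R d /\ InnG e L R (fun x => Phi1 d x - d' x) /\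
            forall x, Phi2 d x = h x.
Proof.
case=> d'supp d'mul [hsupp [hnab [hsim heq]]].
pose d m := if Q m then d' (e * m * e) else h (e * m * e).
have hrel m n : ~~ Q (m * n) -> h (e * (m * n) * e) = h (e * m * e * (e * n * e)).
  move=> hmn; apply: hsim; first exact: sim_rho.
    exact: notQ_I.
  exact: rhoI.
exists d; split.
  move=> m n; rewrite /d lactE ractE Q_mul.
  case Qm: (Q m); case Qn: (Q n) => /=.
  - by rewrite Q_rho // d'mul.
  - rewrite hrel ?Q_mul ?Qm ?Qn // addr0.
    by case: (heq (e * m * e) (e * n * e) Qm (notQ_I (negbT Qn))).
  - rewrite hrel ?Q_mul ?Qm ?Qn // add0r.
    by case: (heq (e * n * e) (e * m * e) Qn (notQ_I (negbT Qm))).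
  - rewrite hrel ?Q_mul ?Qm ?Qn // addr0 hnab //.
      by apply: rhoI; rewrite Q_mul Qm.
    apply/imset2P; exists (e * m * e) (e * n * e) => //; apply: I_nabla; exact: notQ_I (negbT _).
split.
  exists 0 => g; rewrite /Phi1; case: ifP => hg.
    by rewrite /d Q_units // units_ege // subrr L0 // R0 // subrr.
  by rewrite d'supp ?hg // subrr.
move=> x; rewrite /Phi2; case: ifP => hx; last by rewrite hsupp ?hx.
by rewrite /d (negbTE (I_notQ hx)) (cornerP _ ee (I_corner hx)).
Qed.

Definition ginv g := odflt e [pick v in corner e | (g * v == e) && (v * g == e)].

Lemma ginvP g : g \in G -> [/\ ginv g \in corner e, g * ginv g = e & ginv g * g = e].
Proof.
move=> hg; rewrite /ginv; case: pickP => [v /andP [cv /andP [/eqP h1 /eqP h2]]|none] //=.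
case/unitsP: hg => _ [v cv [h1 h2]].
by have := none v; rewrite cv h1 h2 !eqxx.
Qed.

Lemma ginv_uniq g v : g \in G -> v \in corner e -> g * v = e -> v = ginv g.
Proof.
move=> hg cv gv; have [ci _ ig] := ginvP hg.
by rewrite -(corner_l ee cv) -ig -mulgA gv (corner_r ee ci).
Qed.

Lemma ginv_units g : g \in G -> ginv g \in G.
Proof.
move=> hg; have [ci gi ig] := ginvP hg.
by apply/unitsP; split=> //; exists g => //; apply: units_corner.
Qed.

Lemma ginvM g h : g \in G -> h \in G -> ginv (g * h) = ginv h * ginv g.
Proof.
move=> hg hh; have [cg gg' g'g] := ginvP hg; have [ch hh' h'h] := ginvP hh.
symmetry; apply: ginv_uniq; first exact: units_mul.
  exact: corner_mul.
by rewrite -mulgA (mulgA h) hh' (corner_l ee cg).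
Qed.

Lemma reindexG (F : M -> A) g : g \in G ->
  \sum_(h in G) F h = \sum_(h in G) F (g * h)%g.
Proof.
move=> hg.
have inj : {in G &, injective (fun h => g * h)}.
  move=> h1 h2 c1 c2 /(congr1 (fun t => ginv g * t)).
  have [_ _ ig] := ginvP hg.
  by rewrite !mulgA ig !(corner_l ee) // units_corner.
rewrite -(big_imset _ inj); apply: eq_bigl => x.
have -> : [set g * h | h in G] = G; last by [].
apply/eqP; rewrite eqEcard (card_in_imset inj) leqnn andbT.
by apply/subsetP => _ /imsetP [h hh ->]; apply: units_mul.
Qed.

Lemma Lsum g (F : M -> A) : g \in G -> L g (\sum_(h in G) F h) = \sum_(h in G) L g (F h).
Proof. by move=> hg; apply: (big_morph _ (LD hg) (L0 hg)). Qed.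
Lemma Rsum g (F : M -> A) : g \in G -> R g (\sum_(h in G) F h) = \sum_(h in G) R g (F h).
Proof. by move=> hg; apply: (big_morph _ (RD hg) (R0 hg)). Qed.

Lemma LRc g h a : g \in G -> h \in G -> L g (R h a) = R h (L g a).
Proof. by move: hA; rewrite /GGop_module => -[_ [_ [_ [_ [_ [_ H]]]]]]; move=> hg hh; apply: H. Qed.
Lemma Rmul g h a : g \in G -> h \in G -> R (g * h) a = R h (R g a).
Proof. by move: hA; rewrite /GGop_module => -[_ [_ [_ [_ [_ [H _]]]]]]; move=> hg hh; apply: H. Qed.

Lemma derG_inner d : (#|G|%:R : k) != 0 -> DerG e L R d -> InnG e L R d.
Proof.
move=> hn [dsupp dmul].
pose S := \sum_(h in G) R (ginv h) (d h).
have key g : g \in G -> L g S - R g S = - (#|G|%:R *: d g).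
  move=> hg; rewrite /S Lsum // Rsum //.
  have -> : \sum_(h in G) L g (R (ginv h) (d h)) =
            \sum_(h in G) (R (ginv h) (d (g * h)%g) - d g).
    apply: eq_bigr => h hh; have [ci hi ih] := ginvP hh.
    have ui := ginv_units hh.
    rewrite LRc // (dmul _ _ hg hh) RD // -Rmul // hi Re.
    by rewrite addrK.
  have -> : \sum_(h in G) R g (R (ginv h) (d h)) =
            \sum_(h in G) R (ginv h) (d (g * h)%g).
    rewrite (reindexG _ hg); apply: eq_bigr => h hh.
    have [ci gi ig] := ginvP hg.
    rewrite -Rmul ?ginv_units ?units_mul // ginvM // -mulgA ig.
    by have [chi _ _] := ginvP hh; rewrite (corner_r ee chi).
  by rewrite sumrB sumr_const addrC addKr scaler_nat.
exists (- (#|G|%:R)^-1 *: S) => g.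
case: ifP => hg; last by rewrite dsupp ?hg.
rewrite LZ // RZ // -scalerBr key // scaleNr scalerN opprK scalerA mulVf //.
by rewrite scale1r.
Qed.

Lemma char_ok : (forall p, p \in [pchar k]%R -> ~~ (p %| #|G|)%N) -> (#|G|%:R : k) != 0.
Proof.
move=> hp; apply/negP => h0.
have gt0 : (0 < #|G|)%N by apply/card_gt0P; exists e; exact: eG.
have [p hpc] := natf0_pchar gt0 h0.
by have := hp p hpc; rewrite (dvdn_pcharf hpc) h0.
Qed.

End Coh.
Local Open Scope ring_scope.

Theorem mainTheorem15 (M : finMonoidType) (k : fieldType)
  (hrect : rectangular M)
  (hsplit : splitting_field_maxsubgroups M k)
  (X : {set M}) (eX : M) (heX : idem eX) (hX : X = ideal eX)
  (A : lmodType k) (L R : M -> A -> A) (hA : GGop_module eX L R) :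
  H1_iso_sum X eX L R /\
  ((forall p, p \in [pchar k]%R -> ~~ (p %| #|units eX|)%N) -> H1_iso_Hom X eX L R).
Proof.
have lin (d1 d2 : M -> A) c (S : {set M}) x :
  (if x \in S then c *: d1 x + d2 x else 0) =
  c *: (if x \in S then d1 x else 0) + (if x \in S then d2 x else 0).
  by case: (x \in S) => //; rewrite scaler0 addr0.
split.
  exists (fun d => (Phi1 eX d, Phi2 eX d)); split.
    by move=> c d1 d2 _ _ x /=; rewrite /Phi1 /Phi2 !lin.
  split; first by move=> d hd; exact: (phi_der hrect heX hX hA hd).
  split; first by move=> d hd; exact: (phi_ker hrect heX hX hA hd).
  by move=> d' h hd' hh; exact: (phi_surj hrect heX hX hA hd' hh).
move=> hp; exists (fun d => Phi2 eX d); split.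
  by move=> c d1 d2 _ _ x /=; rewrite /Phi2 !lin.
split; first by move=> d hd; exact: (phi_der hrect heX hX hA hd).2.
split.
  move=> d hd; have [k1 k2] := phi_ker hrect heX hX hA hd; split => [h|hi].
    apply: k1; split=> //; apply: (derG_inner heX hA (char_ok heX hp)).
    exact: (phi_der hrect heX hX hA hd).1.
  by case: (k2 hi).
move=> h hh.
have d0 : DerG eX L R (fun _ => 0).
  split=> // g g' hg hg'; by rewrite (L0 hA hg) (R0 hA hg') addr0.
have [d [hd [_ h2]]] := phi_surj hrect heX hX hA d0 hh.
by exists d.
Qed.
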